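(* Let $P,R\in\mathrm{Sym}(n,\mathbb{R})$ and $Q\in\mathrm{Mat}(n,\mathbb{R})$ with $P$ invertible, and let $B=\begin{bmatrix}P^{-1}&-P^{-1}Q\\-Q^TP^{-1}&Q^TP^{-1}Q-R\end{bmatrix}$, $J=\begin{bmatrix}0&-I_n\\ I_n&0\end{bmatrix}$. Then $JB$ is hyperbolic if and only if $\det\big(a^2P+ia(Q^T-Q)+R\big)\neq0$ for all $a\in\mathbb{R}$.
   Context: A real matrix is hyperbolic if it has no eigenvalue on the imaginary axis. *)

(* Defs.v *)
From HB Require Import structures.
From mathcomp Require Import all_boot all_order all_algebra.
From mathcomp Require Import reals complex.
Set Implicit Arguments. Unset Strict Implicit. Unset Printing Implicit Defensive.
Import Order.TTheory GRing.Theory Num.Theory.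
Local Open Scope ring_scope.
Local Open Scope complex_scope.

Definition cmx (R : realType) m n (A : 'M[R]_(m, n)) : 'M[R[i]]_(m, n) :=
  map_mx (fun x => x%:C) A.

Definition hyperbolic (R : realType) n (M : 'M[R]_n) : Prop :=
  forall b : R, ~~ eigenvalue (cmx M) (Complex 0 b).

Definition Jmx (R : realType) n : 'M[R]_(n + n) :=
  block_mx 0 (- 1%:M) 1%:M 0.

Definition Bmx (R : realType) n (P Q S : 'M[R]_n) : 'M[R]_(n + n) :=
  block_mx (invmx P) (- (invmx P *m Q))
           (- (Q^T *m invmx P)) (Q^T *m invmx P *m Q - S).

(* Main.v *)
Require Import Defs.
Set Warnings "-all".
From HB Require Import structures.
From mathcomp Require Import all_boot all_order all_algebra.
From mathcomp Require Import reals complex.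
Import Order.TTheory GRing.Theory Num.Theory.
Local Open Scope ring_scope.
Local Open Scope complex_scope.

Lemma zmod_aux (V : zmodType) (A B C : V) : (A - B + C) + - A + (B - C) = 0.
Proof. by rewrite -[A - B + C]addrA [A + _ - A]addrAC subrr add0r (addrC (- B)) -opprB ?addNr ?subrr. Qed.

Lemma key (F : fieldType) n (p q s pi : 'M[F]_n) (l : F) :
  pi *m p = 1%:M -> p *m pi = 1%:M ->
  eigenvalue (block_mx (q^T *m pi) (- (q^T *m pi *m q - s)) pi (- (pi *m q))) l
  = (\det (- (l ^+ 2) *: p + l *: (q^T - q) + s) == 0).
Proof.
move=> Hpi Hp.
apply/eigenvalueP/det0P.
- move=> [v Hv v0].
  rewrite -(hsubmxK v) mul_row_block scale_row_mx in Hv.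
  rewrite -(hsubmxK v) in v0.
  set x := lsubmx v in Hv v0; set y := rsubmx v in Hv v0.
  case/eq_row_mx: Hv => E1 E2.
  have Y : y = l *: (x *m p) - x *m q^T.
    have := congr1 (mulmx^~ p) E1.
    rewrite /= mulmxDl -!mulmxA Hpi !mulmx1 -scalemxAl => <-.
    by rewrite addrC addKr.
  have Hy : y *m (pi *m q) = l *: (x *m q) - x *m (q^T *m pi *m q).
    by rewrite Y mulmxBl -scalemxAl !mulmxA -(mulmxA x p) Hp mulmx1.
  exists x.
    apply: contraNneq v0 => x0; rewrite Y x0 mul0mx scaler0 mul0mx subrr.
    by rewrite row_mx_eq0 !eqxx.
  rewrite mulmxN mulmxBr opprB mulmxN Hy opprB addrA subrK in E2.
  move/eqP: E2; rewrite subr_eq => /eqP E2.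
  rewrite !mulmxDr -!scalemxAr mulmxBr E2 Y !scalerBr scalerA -expr2 scaleNr.
  by rewrite addrACA addKr subrK addNr.
- move=> [x x0 Hx].
  exists (row_mx x (l *: (x *m p) - x *m q^T)); last first.
    by rewrite row_mx_eq0 negb_and x0.
  rewrite mul_row_block scale_row_mx; congr row_mx.
    by rewrite mulmxBl -scalemxAl -mulmxA Hp mulmx1 !mulmxA addrC subrK.
  have Hy : (l *: (x *m p) - x *m q^T) *m (pi *m q) = l *: (x *m q) - x *m (q^T *m pi *m q).
    by rewrite mulmxBl -scalemxAl !mulmxA -(mulmxA x p) Hp mulmx1.
  rewrite mulmxN mulmxBr opprB mulmxN Hy opprB addrA subrK.
  rewrite !mulmxDr -!scalemxAr mulmxBr in Hx.
  move/eqP: Hx; rewrite addrC addr_eq0 => /eqP Hs.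
  rewrite -[x *m s]opprK -Hs scaleNr opprD opprK !scalerBr scalerA -expr2 opprB.
  by rewrite addrCA addKr.
Qed.

Lemma sq_i (R : realType) (b : R) : (b ^+ 2)%:C = - (Complex 0 b) ^+ 2.
Proof.
rewrite expr2 /=; apply/eqP; rewrite eq_complex /=.
by rewrite !mul0r !mulr0 sub0r opprK !addr0 oppr0 !eqxx.
Qed.

Theorem lemma2p1 (R : realType) (n : nat) (P Q S : 'M[R]_n) :
  P^T = P -> S^T = S -> P \in unitmx ->
  (hyperbolic (Jmx R n *m Bmx P Q S) <->
   forall a : R,
     \det (cmx (a ^+ 2 *: P) + (Complex 0 a) *: cmx (Q^T - Q) + cmx S) != 0).
Proof.
move=> _ _ Pu.
have JB : Jmx R n *m Bmx P Q S = block_mx (Q^T *m invmx P) (- (Q^T *m invmx P *m Q - S))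
   (invmx P) (- (invmx P *m Q)).
  rewrite /Jmx /Bmx mulmx_block !mul0mx !add0r !addr0 !mul1mx !mulNmx !mul1mx opprK.
  done.
have E : forall b : R, eigenvalue (cmx (Jmx R n *m Bmx P Q S)) (Complex 0 b) =
  (\det (cmx (b ^+ 2 *: P) + Complex 0 b *: cmx (Q^T - Q) + cmx S) == 0).
  move=> b.
  rewrite JB /cmx map_block_mx !map_mxN map_mxB !map_mxM -!map_trmx map_invmx (@key _ _ (map_mx (fun x : R => x%:C) P)).
  - by rewrite map_mxZ map_mxB -map_trmx -sq_i.
  - by rewrite mulVmx // map_unitmx.
  - by rewrite mulmxV // map_unitmx.
split.
- by move=> H a; rewrite -E; apply: H.
- by move=> H b; rewrite E; apply: H.
Qed.
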